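(* Let $\gamma>0$, $\beta>0$, $b\in\mathbb{R}$ and fix $t>0$. For $x_3>0$ define \[ u(x_3,t)=\frac{2e^{-bt}}{4\pi\gamma t}\Big[\frac{e^{-\frac{x_3^2}{4\gamma t}}}{\sqrt{4\pi\gamma t}}-\frac{\beta}{2\gamma}e^{\frac{\beta}{\gamma}(x_3+\beta t)}\mathrm{erfc}\Big(\frac{x_3+2\beta t}{\sqrt{4\gamma t}}\Big)\Big],\qquad u_{\rm EBC}(x_3,t)=\frac{e^{-bt}}{(4\pi\gamma t)^{3/2}}\Big(e^{-\frac{x_3^2}{4\gamma t}}-e^{-\frac{(x_3+2\gamma/\beta)^2}{4\gamma t}}\Big). \] Then $u(x_3,t)\neq0$ for all sufficiently large $x_3$, and \[ \lim_{x_3\to\infty}\left|\frac{u_{\rm EBC}(x_3,t)-u(x_3,t)}{u(x_3,t)}\right|=\frac12 . \]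
   Context: $\mathrm{erfc}(\xi)=\frac{2}{\sqrt\pi}\int_\xi^\infty e^{-s^2}ds$. Here $u$ is the exact solution at $x_1=x_2=0$ of the half-space Robin problem with boundary source $\delta(x_1)\delta(x_2)\delta(t)$, and $u_{\rm EBC}$ is the extrapolated-boundary approximation with extrapolation distance $\gamma/\beta$. *)

(* Defs.v *)
From Stdlib Require Import Reals Lra.
Open Scope R_scope.

Definition gauss (s : R) : R := exp (- s ^ 2).

(* E is the complementary error function:
   E xi = 2/sqrt(pi) * \int_xi^\infty exp(-s^2) ds, the improper integral
   being the limit as M -> +infinity of the Riemann integrals over [xi, M]. *)
Definition is_erfc (E : R -> R) : Prop :=
  forall xi eps, 0 < eps -> exists M0, forall M (pr : Riemann_integrable gauss xi M),
    M0 < M -> Rabs (2 / sqrt PI * RiemannInt pr - E xi) < eps.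

(* exact solution at x1 = x2 = 0 *)
Definition u (E : R -> R) (gamma beta b x3 t : R) : R :=
  2 * exp (- b * t) / (4 * PI * gamma * t) *
  ( exp (- x3 ^ 2 / (4 * gamma * t)) / sqrt (4 * PI * gamma * t)
    - beta / (2 * gamma) * exp (beta / gamma * (x3 + beta * t))
      * E ((x3 + 2 * beta * t) / sqrt (4 * gamma * t)) ).

Definition uEBC (gamma beta b x3 t : R) : R :=
  exp (- b * t) / Rpower (4 * PI * gamma * t) (3 / 2) *
  ( exp (- x3 ^ 2 / (4 * gamma * t))
    - exp (- (x3 + 2 * gamma / beta) ^ 2 / (4 * gamma * t)) ).

(* Main.v *)
Require Import Defs.
From Stdlib Require Import Reals Lra Psatz.
From Coquelicot Require Import Coquelicot.
Open Scope R_scope.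

Lemma gauss_cont : forall s, continuous gauss s.
Proof. intros s; apply (@ex_derive_continuous R_AbsRing R_NormedModule); unfold gauss; auto_derive; auto. Qed.

Lemma gauss_ex z M : ex_RInt gauss z M.
Proof. apply (@ex_RInt_continuous R_CompleteNormedModule); intros; apply gauss_cont. Qed.

Lemma gauss_int_bound z M : 0 < z -> z <= M ->
  0 <= RInt gauss z M /\ RInt gauss z M <= exp (- z ^ 2) / (2 * z).
Proof.
  intros hz hM; split.
  - apply RInt_ge_0; auto. apply gauss_ex. intros; unfold gauss; left; apply exp_pos.
  - set (g := fun s => s / z * exp (- s ^ 2)).
    set (F := fun s => - exp (- s ^ 2) / (2 * z)).
    assert (HI : is_RInt g z M (minus (F M) (F z))).
    { apply (@is_RInt_derive R_CompleteNormedModule).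
      - intros x _. unfold F, g. auto_derive; auto. simpl; field. lra.
      - intros x _. apply (@ex_derive_continuous R_AbsRing R_NormedModule). unfold g; auto_derive; auto. }
    assert (Hle : RInt gauss z M <= RInt g z M).
    { apply RInt_le; auto. apply gauss_ex. eexists; exact HI.
      intros x Hx. unfold gauss, g.
      rewrite <- (Rmult_1_l (exp (- x ^ 2))) at 1.
      apply Rmult_le_compat_r. left; apply exp_pos.
      apply Rmult_le_reg_r with z; auto. field_simplify; lra. }
    rewrite (is_RInt_unique _ _ _ _ HI) in Hle.
    unfold minus, plus, opp in Hle; simpl in Hle. unfold F in Hle.
    assert (0 < exp (- M ^ 2) / (2 * z)).
    { apply Rdiv_lt_0_compat. apply exp_pos. lra. }
    replace (- exp (- M ^ 2) / (2 * z) + - (- exp (- z ^ 2) / (2 * z)))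
      with (exp (- z ^ 2) / (2 * z) - exp (- M ^ 2) / (2 * z)) in Hle by (field; lra).
    lra.
Qed.

Lemma le_eps x y : (forall eps, 0 < eps -> x < y + eps) -> x <= y.
Proof. intros H. destruct (Rle_lt_dec x y); auto. specialize (H (x - y)). lra. Qed.

Lemma erfc_bound E (HE : is_erfc E) z : 0 < z ->
  0 <= E z /\ E z <= exp (- z ^ 2) / (z * sqrt PI).
Proof.
  intros hz.
  assert (hpi : 0 < sqrt PI) by (apply sqrt_lt_R0; apply PI_RGT_0).
  assert (key : forall eps, 0 < eps -> exists I, 0 <= I <= exp (- z ^ 2) / (2 * z) /\
            Rabs (2 / sqrt PI * I - E z) < eps).
  { intros eps he. destruct (HE z eps he) as [M0 HM].
    set (M := Rmax (M0 + 1) z).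
    assert (hzM : z <= M) by apply Rmax_r.
    assert (hM0 : M0 < M) by (unfold M; pose proof (Rmax_l (M0+1) z); lra).
    pose (pr := ex_RInt_Reals_0 _ _ _ (gauss_ex z M)).
    exists (RiemannInt pr). rewrite <- (RInt_Reals _ _ _ pr). split.
    apply gauss_int_bound; auto. rewrite (RInt_Reals _ _ _ pr). apply HM; auto. }
  assert (hc : 0 < 2 / sqrt PI) by (apply Rdiv_lt_0_compat; lra).
  split.
  - apply Ropp_le_cancel. rewrite Ropp_0. apply le_eps. intros eps he.
    destruct (key eps he) as [I [[h1 h2] h3]].
    apply Rabs_def2 in h3. assert (0 <= 2 / sqrt PI * I) by (apply Rmult_le_pos; lra). lra.
  - apply le_eps. intros eps he.
    destruct (key eps he) as [I [[h1 h2] h3]].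
    apply Rabs_def2 in h3.
    assert (2 / sqrt PI * I <= 2 / sqrt PI * (exp (- z ^ 2) / (2 * z)))
      by (apply Rmult_le_compat_l; lra).
    replace (2 / sqrt PI * (exp (- z ^ 2) / (2 * z))) with (exp (- z ^ 2) / (z * sqrt PI))
      in H by (field; lra).
    lra.
Qed.

Lemma alg h w d : 0 <= h <= d -> 0 <= w <= d -> d <= 1/2 ->
  Rabs (Rabs ((1 - h) / (2 * (1 - w)) - 1) - 1/2) <= d.
Proof.
  intros Hh Hw Hd.
  set (v := (1 - h) / (2 * (1 - w))).
  assert (Hv : v * (2 * (1 - w)) = 1 - h) by (unfold v; field; lra).
  assert (v <= 1/2 + d) by nra.
  assert (v >= 1/2 - d) by nra.
  assert (Hn : v - 1 <= 0) by lra. rewrite (Rabs_left1 _ Hn).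
  apply Rabs_le; lra.
Qed.

Lemma Rpower32 A : 0 < A -> Rpower A (3/2) = A * sqrt A.
Proof.
  intros hA. replace (3/2) with (1 + /2) by field.
  rewrite Rpower_plus, Rpower_1, Rpower_sqrt; auto.
Qed.

Lemma exp_small y d : 0 < d -> 1 / d <= y -> exp (- y) < d.
Proof.
  intros hd hy. assert (0 < y). { assert (0 < 1/d) by (apply Rdiv_lt_0_compat; lra). lra. }
  pose proof (exp_ineq1 y ltac:(lra)). rewrite exp_Ropp.
  assert (1/d < exp y) by lra.
  apply Rmult_lt_reg_l with (exp y). apply exp_pos.
  rewrite Rinv_r by (pose proof (exp_pos y); lra).
  apply Rmult_lt_reg_r with (/d). apply Rinv_0_lt_compat; lra.
  replace (exp y * d * / d) with (exp y) by (field; lra). lra.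
Qed.

Lemma core (E : R -> R) (HE : is_erfc E)
  (gamma beta b t : R) (hgamma : 0 < gamma) (hbeta : 0 < beta) (ht : 0 < t) d :
  0 < d -> d <= 1/2 -> exists X, forall x3, X < x3 ->
  u E gamma beta b x3 t <> 0 /\
  Rabs (Rabs ((uEBC gamma beta b x3 t - u E gamma beta b x3 t)
                 / u E gamma beta b x3 t) - 1 / 2) <= d.
Proof.
  intros hd hd2.
  set (A := 4 * PI * gamma * t).
  assert (hA : 0 < A) by (unfold A; pose proof PI_RGT_0; apply Rmult_lt_0_compat; [apply Rmult_lt_0_compat; [apply Rmult_lt_0_compat|]|]; lra).
  set (p := sqrt A). assert (hp : 0 < p) by (apply sqrt_lt_R0; auto).
  set (s := sqrt (4 * gamma * t)).
  assert (hs : 0 < s) by (apply sqrt_lt_R0; nra).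
  assert (hs2 : s ^ 2 = 4 * gamma * t) by (unfold s; rewrite pow2_sqrt; nra).
  assert (hpi : 0 < sqrt PI) by (apply sqrt_lt_R0; apply PI_RGT_0).
  set (c := 2 * gamma / beta). assert (hc : 0 < c) by (unfold c; apply Rdiv_lt_0_compat; lra).
  set (D1 := p * (beta / (2 * gamma)) * s / sqrt PI).
  assert (hD1 : 0 < D1).
  { unfold D1. assert (0 < beta / (2 * gamma)) by (apply Rdiv_lt_0_compat; lra).
    apply Rdiv_lt_0_compat; auto. apply Rmult_lt_0_compat; auto. apply Rmult_lt_0_compat; auto. }
  set (D2 := 4 * gamma * t / (2 * c * d)).
  assert (hD2 : 0 < D2) by (unfold D2; apply Rdiv_lt_0_compat; nra).
  exists (D1 / d + D2 + 1). intros x hx.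
  assert (hD1d : 0 < D1 / d) by (apply Rdiv_lt_0_compat; lra).
  assert (hx0 : 0 < x) by lra.
  set (z := (x + 2 * beta * t) / s).
  assert (hz : 0 < z) by (unfold z; apply Rdiv_lt_0_compat; nra).
  destruct (erfc_bound E HE z hz) as [hE1 hE2].
  set (w := p * (beta / (2 * gamma)) * (exp (z ^ 2) * E z)).
  set (h := exp (- (x + c) ^ 2 / (4 * gamma * t) + x ^ 2 / (4 * gamma * t))).
  set (g := exp (- x ^ 2 / (4 * gamma * t))).
  set (e := exp (- b * t)).
  assert (hg : 0 < g) by apply exp_pos.
  assert (he : 0 < e) by apply exp_pos.
  assert (hw0 : 0 <= w).
  { unfold w. apply Rmult_le_pos. apply Rmult_le_pos. lra. left; apply Rdiv_lt_0_compat; lra.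
    apply Rmult_le_pos; auto. left; apply exp_pos. }
  assert (hw1 : w <= D1 / x).
  { unfold w. assert (exp (z ^ 2) * E z <= 1 / (z * sqrt PI)).
    { assert (exp (z^2) * (exp (- z ^ 2) / (z * sqrt PI)) = 1 / (z * sqrt PI)).
      { assert (hm : exp (z^2) * exp (- z^2) = 1) by (rewrite <- exp_plus; replace (z^2 + - z^2) with 0 by ring; apply exp_0).
        unfold Rdiv. rewrite <- Rmult_assoc, hm. reflexivity. }
      rewrite <- H. apply Rmult_le_compat_l; auto. left; apply exp_pos. }
    assert (hk : 0 < p * (beta / (2 * gamma))).
    { apply Rmult_lt_0_compat; auto. apply Rdiv_lt_0_compat; lra. }
    apply Rle_trans with (p * (beta / (2 * gamma)) * (1 / (z * sqrt PI))).
    apply Rmult_le_compat_l; lra.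
    unfold D1, z. apply Rmult_le_reg_r with (x * (x + 2 * beta * t) * sqrt PI).
    repeat apply Rmult_lt_0_compat; nra.
    field_simplify. 2: repeat split; lra.
    unfold Rdiv. apply Rmult_le_compat_r. left; apply Rinv_0_lt_compat; lra.
    assert (0 < p * beta ^ 2 * t * s) by (apply Rmult_lt_0_compat; [apply Rmult_lt_0_compat; [apply Rmult_lt_0_compat|]|]; nra).
    lra. repeat split; apply Rgt_not_eq; nra. }
  assert (hwd : w <= d).
  { assert (D1 < d * x).
    { replace D1 with (d * (D1 / d)) by (field; lra). apply Rmult_lt_compat_l; lra. }
    apply Rle_trans with (D1 / x); auto.
    unfold Rdiv; apply Rmult_le_reg_r with x; auto.
    rewrite Rmult_assoc, Rinv_l, Rmult_1_r; lra. }
  assert (hh0 : 0 <= h) by (left; apply exp_pos).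
  assert (hhd : h <= d).
  { left. unfold h.
    replace (- (x + c) ^ 2 / (4 * gamma * t) + x ^ 2 / (4 * gamma * t))
      with (- ((2 * x * c + c ^ 2) / (4 * gamma * t))) by (field; nra).
    apply exp_small; auto.
    apply Rle_trans with ((2 * D2 * c) / (4 * gamma * t)).
    right. unfold D2. field. repeat split; apply Rgt_not_eq; nra.
    unfold Rdiv. apply Rmult_le_compat_r. left; apply Rinv_0_lt_compat; nra. nra. }
  assert (hz2 : z ^ 2 = (x + 2 * beta * t) ^ 2 / (4 * gamma * t)).
  { unfold z. rewrite <- hs2. field. apply Rgt_not_eq; lra. }
  assert (hexp : exp (beta / gamma * (x + beta * t)) = g * exp (z ^ 2)).
  { unfold g. rewrite <- exp_plus. f_equal. rewrite hz2. field. repeat split; apply Rgt_not_eq; nra. }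
  assert (hu : u E gamma beta b x t = 2 * e * g / (A * p) * (1 - w)).
  { unfold u. fold A p s z e g. rewrite hexp. unfold w. field. repeat split; apply Rgt_not_eq; nra. }
  assert (hexp2 : exp (- (x + c) ^ 2 / (4 * gamma * t)) = g * h).
  { unfold g, h. rewrite <- exp_plus. f_equal. field. split; apply Rgt_not_eq; nra. }
  assert (hU : uEBC gamma beta b x t = e * g / (A * p) * (1 - h)).
  { unfold uEBC. fold A e g. rewrite Rpower32 by auto. fold p c. rewrite hexp2. field.
    repeat split; apply Rgt_not_eq; nra. }
  assert (hun : u E gamma beta b x t <> 0).
  { rewrite hu. apply Rgt_not_eq. apply Rmult_lt_0_compat; [|lra].
    apply Rdiv_lt_0_compat; nra. }
  split; auto.
  replace ((uEBC gamma beta b x t - u E gamma beta b x t) / u E gamma beta b x t)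
    with ((1 - h) / (2 * (1 - w)) - 1).
  apply alg; lra.
  rewrite hU, hu. field. repeat split; apply Rgt_not_eq; nra.
Qed.

Theorem mainTheorem6 (erfc : R -> R) (Herfc : is_erfc erfc)
  (gamma beta b t : R) (hgamma : 0 < gamma) (hbeta : 0 < beta) (ht : 0 < t) :
  (exists X, forall x3, X < x3 -> u erfc gamma beta b x3 t <> 0) /\
  (forall eps, 0 < eps -> exists X, forall x3, X < x3 ->
     Rabs (Rabs ((uEBC gamma beta b x3 t - u erfc gamma beta b x3 t)
                 / u erfc gamma beta b x3 t) - 1 / 2) < eps).
Proof.
  split.
  - destruct (core erfc Herfc gamma beta b t hgamma hbeta ht (1/2)) as [X HX]; try lra.
    exists X. intros x hx. apply (HX x hx).
  - intros eps he.
    destruct (core erfc Herfc gamma beta b t hgamma hbeta ht (Rmin (1/2) (eps/2))) as [X HX].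
    + apply Rmin_glb_lt; lra.
    + apply Rmin_l.
    + exists X. intros x hx. destruct (HX x hx) as [_ H].
      pose proof (Rmin_r (1/2) (eps/2)). lra.
Qed.
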